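(* Let $R$ be an integral domain, let $\mathbb{F}$ be a field containing $R$ in which the polynomials below split, and let $h,y\in R$ be nonzero. Let $a=(a_n)_{n\ge 0}$ be a linear recurrent sequence over $R$ of degree $r$ with characteristic polynomial $$f(t)=t^r+\sum_{i=1}^r(-1)^i\sigma_i t^{r-i}\in R[t],$$ whose zeros in $\mathbb{F}$ (with multiplicity) are $\alpha_1,\ldots,\alpha_r$, so that $\sigma_i$ is the $i$-th elementary symmetric function of $\alpha_1,\dots,\alpha_r$. Let $b=L^{(h,y)}(a)$, i.e. $b_n=\sum_{i=0}^n\binom{n}{i}h^iy^{n-i}a_i$. Then $b$ is a linear recurrent sequence of degree $r$ whose characteristic polynomial $g(t)$ has zeros $h\alpha_1+y,\ldots,h\alpha_r+y$. Moreover $$g(t)=t^r+\sum_{i=1}^r(-1)^i\overline{\sigma_i}\,t^{r-i},\qquad \overline{\sigma_i}=\sum_{k=0}^{i}\binom{r-k}{i-k}h^k y^{i-k}\sigma_k\quad (i=1,\ldots,r),$$ with the convention $\sigma_0=1$.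
   Context: A linear recurrent sequence of degree $r$ over $R$ with characteristic polynomial $f(t)=t^r-c_1t^{r-1}-\dots-c_r$ is a sequence $(a_n)_{n\ge0}$ in $R$ with $a_{n+r}=c_1a_{n+r-1}+\dots+c_ra_n$ for all $n\ge 0$. For $h,y\in R$ the generalized Binomial interpolated operator $L^{(h,y)}$ sends a sequence $a=(a_n)_{n\ge0}$ to the sequence $b$ with $b_n=\sum_{i=0}^n\binom{n}{i}h^iy^{n-i}a_i$ (in the paper it is introduced for nonzero $h,y$). *)

(* Defs.v *)
From HB Require Import structures.
From mathcomp Require Import all_boot all_order all_algebra.
Set Implicit Arguments. Unset Strict Implicit. Unset Printing Implicit Defensive.
Import Order.TTheory GRing.Theory Num.Theory.
Local Open Scope ring_scope.

Definition lrs (R : comNzRingType) (r : nat) (c : nat -> R) (a : nat -> R) : Prop :=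
  forall n : nat, a (n + r)%N = \sum_(1 <= i < r.+1) c i * a (n + r - i)%N.

Definition lrs_charpoly (R : comNzRingType) (r : nat) (c : nat -> R) : {poly R} :=
  'X^r - \sum_(1 <= i < r.+1) c i *: 'X^(r - i).

Definition has_charpoly (R : comNzRingType) (r : nat) (f : {poly R}) (a : nat -> R) : Prop :=
  exists c : nat -> R, f = lrs_charpoly r c /\ lrs r c a.

Definition binom_interp (R : comNzRingType) (h y : R) (a : nat -> R) : nat -> R :=
  fun n => \sum_(i < n.+1) 'C(n, i)%:R * h ^+ i * y ^+ (n - i) * a i.

(* Main.v *)
Require Import Defs.
From HB Require Import structures.
From mathcomp Require Import all_boot all_order all_algebra.
From mathcomp Require Import ring.
Import Order.TTheory GRing.Theory Num.Theory.
Local Open Scope ring_scope.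

Lemma comb (S : comNzRingType) (r : nat) (H y T : S) (s : nat -> S) :
 \sum_(k < r.+1) (-1) ^+ k * s k * H ^+ k * (T - y) ^+ (r - k)
 = \sum_(i < r.+1) (-1) ^+ i * (\sum_(k < i.+1) 'C(r - k, i - k)%:R * H ^+ k * y ^+ (i - k) * s k) * T ^+ (r - i).
Proof.
rewrite [RHS](_ : _ = \sum_(0 <= i < r.+1) \sum_(0 <= k < i.+1)
   (-1) ^+ i * ('C(r - k, i - k)%:R * H ^+ k * y ^+ (i - k) * s k) * T ^+ (r - i)); last first.
  rewrite big_mkord; apply: eq_bigr => i _; rewrite big_mkord big_distrr big_distrl /=.
  by apply: eq_bigr => k _; rewrite mulrA.
rewrite -(big_mkord xpredT (fun k => (-1) ^+ k * s k * H ^+ k * (T - y) ^+ (r - k))).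
transitivity (\sum_(0 <= i < r.+1) \sum_(0 <= k < r.+1 | (k < i.+1)%N)
   (-1) ^+ i * ('C(r - k, i - k)%:R * H ^+ k * y ^+ (i - k) * s k) * T ^+ (r - i)); last first.
  apply: eq_big_nat => i /andP[_ Hi]; rewrite (big_nat_widen _ _ _ _ _ Hi).
  by apply: eq_bigl.
rewrite (@exchange_big_dep_nat _ _ _ _ _ _ _ _ _ xpredT) //=.
apply: eq_big_nat => k /andP[_ Hk].
rewrite (@big_cat_nat _ _ _ k 0 r.+1 _ _ (leq0n k) (ltnW Hk)) /= big_nat_cond big1 ?add0r; last first.
  by move=> i /andP[/andP[_ Hi] Hki]; rewrite ltnS leqNgt Hi in Hki.
rewrite (big_addn 0 r.+1 k).
rewrite exprDn.
rewrite big_distrr /= -(big_mkord xpredT (fun j => (-1) ^+ k * s k * H ^+ k * (T ^+ (r - k - j) * (- y) ^+ j *+ 'C(r - k, j)))).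

have -> : (r.+1 - k = (r - k).+1)%N by rewrite subSn.
rewrite [RHS](eq_bigl xpredT); last by move=> j; rewrite ltnS leq_addl.
apply: eq_big_nat => j /andP[_ Hj].
rewrite addnK.
have -> : (r - (j + k) = r - k - j)%N by rewrite subnDA subnAC.
rewrite (exprNn y) exprD -mulr_natr; ring.
Qed.

Set Implicit Arguments.
Section Seq.
Variable R : comNzRingType.
Implicit Types (p q : {poly R}) (a b u v : nat -> R).

Definition app p a : nat -> R := fun n => \sum_(i < size p) p`_i * a (n + i)%N.

Lemma appE p a n N : (size p <= N)%N -> app p a n = \sum_(i < N) p`_i * a (n + i)%N.
Proof.
move=> hN; rewrite /app (big_ord_widen _ (fun i => p`_i * a (n + i)%N) hN) big_mkcond /=.
apply: eq_bigr => i _; case: ifP => // /negbT; rewrite -leqNgt => hi.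
by rewrite nth_default // mul0r.
Qed.

Lemma app_ext p a b n : (forall m, a m = b m) -> app p a n = app p b n.
Proof. by move=> e; rewrite /app; apply: eq_bigr => i _; rewrite e. Qed.

Lemma app0 a n : app 0 a n = 0.
Proof. by rewrite /app size_poly0 big_ord0. Qed.

Lemma appD p q a n : app (p + q) a n = app p a n + app q a n.
Proof.
set N := maxn (size p) (size q).
rewrite (appE _ _ _ _ (size_polyD p q)) (@appE p a n N) ?leq_maxl // (@appE q a n N) ?leq_maxr //.
by rewrite -big_split; apply: eq_bigr => i _; rewrite coefD mulrDl.
Qed.

Lemma appZ c p a n : app (c *: p) a n = c * app p a n.
Proof.
rewrite (appE _ _ _ _ (size_scale_leq c p)) /app big_distrr.
by apply: eq_bigr => i _; rewrite coefZ -mulrA.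
Qed.

Lemma appN p a n : app (- p) a n = - app p a n.
Proof. by rewrite -scaleN1r appZ mulN1r. Qed.

Lemma appB p q a n : app (p - q) a n = app p a n - app q a n.
Proof. by rewrite appD appN. Qed.

Lemma appC c a n : app c%:P a n = c * a n.
Proof.
rewrite (@appE _ _ _ 1) ?size_polyC ?leq_b1 // big_ord1 coefC /=.
by rewrite addn0.
Qed.

Lemma appMX p a n : app (p * 'X) a n = app p a n.+1.
Proof.
have h : (size (p * 'X)%R <= (size p).+1)%N.
  have [->|pn0] := eqVneq p 0; first by rewrite mul0r size_poly0.
  by rewrite size_mulX.
rewrite (appE _ _ _ _ h) big_ord_recl coefMX /= mul0r add0r /app.
by apply: eq_bigr => i _; rewrite coefMX /= addnS addSn.
Qed.

Lemma appXn m a n : app 'X^m a n = a (n + m)%N.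
Proof.
rewrite (@appE _ _ _ m.+1) ?size_polyXn // big_ord_recr /= coefXn eqxx mul1r big1 ?add0r //.
by move=> i _; rewrite coefXn eqn_leq [(m <= i)%N]leqNgt ltn_ord andbF mul0r.
Qed.

Lemma app_sum I (s : seq I) (P : pred I) (F : I -> {poly R}) a n :
  app (\sum_(i <- s | P i) F i) a n = \sum_(i <- s | P i) app (F i) a n.
Proof. exact: (big_morph (fun p => app p a n) (fun p q => appD p q a n) (app0 a n)). Qed.

Lemma lrs_app r c a : lrs r c a <-> forall n, app (lrs_charpoly r c) a n = 0.
Proof.
have e : forall n, app (lrs_charpoly r c) a n = a (n + r)%N - \sum_(1 <= i < r.+1) c i * a (n + r - i)%N.
  move=> n; rewrite /lrs_charpoly appB appXn app_sum; congr (_ - _).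
  apply: eq_big_nat => i /andP[h1 h2]; rewrite appZ appXn addnBA //.
split=> [H n|H n]; first by rewrite e H subrr.
by apply/eqP; rewrite -subr_eq0 -e H.
Qed.

Variables h y : R.
Notation L := (binom_interp h y).

Lemma L_ext u v n : (forall m, u m = v m) -> L u n = L v n.
Proof. by move=> e; rewrite /binom_interp; apply: eq_bigr => i _; rewrite e. Qed.

Lemma LD u v n : L (fun m => u m + v m) n = L u n + L v n.
Proof. by rewrite /binom_interp -big_split; apply: eq_bigr => i _; rewrite mulrDr. Qed.

Lemma LZ c u n : L (fun m => c * u m) n = c * L u n.
Proof. by rewrite /binom_interp big_distrr; apply: eq_bigr => i _ /=; ring. Qed.

Lemma LS u n : L u n.+1 = y * L u n + h * L (fun m => u m.+1) n.
Proof.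
rewrite /binom_interp big_ord_recl /= bin0 subn0.
under eq_bigr => i _ do rewrite /bump /= add1n binS subSS natrD.
under eq_bigr => i _ do rewrite !mulrDl.
rewrite big_split /= addrA; congr (_ + _); last first.
  rewrite big_distrr; apply: eq_bigr => i _ /=; rewrite exprS; ring.
rewrite big_ord_recr /= bin_small // !mul0r addr0.
rewrite [in RHS]big_ord_recl /= bin0 subn0 mulrDr; congr (_ + _); first by rewrite expr0 exprS; ring.
rewrite big_distrr; apply: eq_bigr => i _ /=; rewrite /bump /= add1n.
have -> : (n - i = (n - i.+1).+1)%N by rewrite subnSK.
by rewrite (exprS y); ring.
Qed.

Lemma key_L a : forall p n,
  L (app (p \Po (h%:P * 'X + y%:P)) a) n = app p (L a) n.
Proof.
elim/poly_ind => [|p c IH] n.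
  by rewrite comp_poly0 app0 (L_ext _ (fun m => 0 * a m)) ?LZ ?mul0r // => m; rewrite app0 mul0r.
rewrite comp_poly_MXaddC [RHS]appD appMX appC -IH LS.
set Q := p \Po _.
rewrite -!LZ -!LD; apply: L_ext => m.
rewrite appD appC; congr (_ + _).
rewrite mulrDr appD mulrA [Q * h%:P]mulrC mul_polyC -scalerAl appZ appMX.
by rewrite [Q * y%:P]mulrC mul_polyC appZ addrC.
Qed.

End Seq.

Lemma fullsum (R : nzRingType) (r : nat) (s : nat -> R) : s 0%N = 1 ->
  'X^r + \sum_(1 <= i < r.+1) ((-1) ^+ i * s i) *: 'X^(r - i)
  = \sum_(i < r.+1) ((-1) ^+ i * s i) *: 'X^(r - i).
Proof.
move=> s0; rewrite big_ord_recl /= expr0 mul1r s0 scale1r subn0; congr (_ + _).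
by rewrite big_add1 /= big_mkord.
Qed.

Unset Implicit Arguments.

Theorem theorem4 (R : idomainType) (F : fieldType) (phi : {rmorphism R -> F})
  (phi_inj : injective phi) (h y : R) (hnz : h != 0) (ynz : y != 0)
  (r : nat) (a : nat -> R) (f : {poly R}) (sigma : nat -> R) (alpha : 'I_r -> F)
  (sigma0 : sigma 0%N = 1)
  (f_def : f = 'X^r + \sum_(1 <= i < r.+1) ((-1) ^+ i * sigma i) *: 'X^(r - i))
  (f_split : map_poly phi f = \prod_(j < r) ('X - (alpha j)%:P))
  (a_lrs : has_charpoly r f a) :
  let sigmabar := fun i : nat =>
    \sum_(k < i.+1) 'C(r - k, i - k)%:R * h ^+ k * y ^+ (i - k) * sigma k in
  exists g : {poly R},
    [/\ has_charpoly r g (binom_interp h y a),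
        map_poly phi g = \prod_(j < r) ('X - (phi h * alpha j + phi y)%:P)
      & g = 'X^r + \sum_(1 <= i < r.+1) ((-1) ^+ i * sigmabar i) *: 'X^(r - i)].
Proof.
move=> sb.
have sb0 : sb 0%N = 1 by rewrite /sb big_ord1 /= bin0 !expr0 sigma0 !mul1r.
set g := 'X^r + _.
case: a_lrs => c [fc lc].
have Hf : forall m, app f a m = 0 by move=> m; rewrite fc; exact: (proj1 (lrs_app _ _ _ _) lc m).
have key : g \Po (h%:P * 'X + y%:P) = h ^+ r *: f.
  have e1 : g \Po (h%:P * 'X + y%:P) = \sum_(i < r.+1) (-1) ^+ i *
      (\sum_(k < i.+1) 'C(r - k, i - k)%:R * h%:P ^+ k * y%:P ^+ (i - k) * (sigma k)%:P)
      * (h%:P * 'X + y%:P) ^+ (r - i).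
    rewrite /g fullsum // linear_sum; apply: eq_bigr => i _ /=.
    rewrite comp_polyZ comp_Xn_poly -mul_polyC rmorphM /= rmorph_sign /sb rmorph_sum /=.
    congr (_ * _ * _); apply: eq_bigr => k _.
    by rewrite !rmorphM /= !rmorphXn /= rmorph_nat.
  have e2 : h ^+ r *: f = \sum_(k < r.+1) (-1) ^+ k * (sigma k)%:P * h%:P ^+ k
      * ((h%:P * 'X + y%:P) - y%:P) ^+ (r - k).
    rewrite f_def fullsum // scaler_sumr; apply: eq_bigr => k _ /=.
    have hk : (k <= r)%N by rewrite -ltnS.
    have hr : h%:P ^+ r = h%:P ^+ k * h%:P ^+ (r - k) :> {poly R} by rewrite -exprD subnKC.
    rewrite addrK exprMn scalerA -mul_polyC !rmorphM /= rmorph_sign !rmorphXn /= hr; ring.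
  by rewrite e1 e2 (comb _ r h%:P y%:P (h%:P * 'X + y%:P) (fun k => (sigma k)%:P)).
set c' := fun i => - ((-1) ^+ i * sb i).
have gdef : g = lrs_charpoly r c'.
  rewrite /lrs_charpoly /g -sumrN; congr (_ + _); apply: eq_bigr => i _.
  by rewrite /c' scaleNr opprK.
exists g; split => //.
  exists c'; split => //; apply/lrs_app => n; rewrite -gdef -key_L key.
  rewrite (@L_ext _ h y _ (fun m => 0 * a m)) ?LZ ?mul0r // => m.
  by rewrite appZ Hf mulr0 mul0r.
have phz : phi h != 0.
  by apply: contra hnz => /eqP; rewrite -(rmorph0 phi) => /phi_inj ->.
set mT := (phi h)%:P * 'X + (phi y)%:P.
have mk := congr1 (map_poly phi) key.
rewrite map_comp_poly map_polyZ f_split rmorphD rmorphM /= map_polyX !map_polyC /= -/mT in mk.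
set P := \prod_(j < r) _.
have PmT : P \Po mT = phi (h ^+ r) *: \prod_(j < r) ('X - (alpha j)%:P).
  rewrite /P rmorph_prod /=.
  rewrite (eq_bigr (fun j => (phi h)%:P * ('X - (alpha j)%:P))); last first.
    move=> j _; rewrite comp_polyB comp_polyX comp_polyC /mT rmorphD rmorphM /=.
    rewrite mulrBr; ring.
  by rewrite big_split /= prodr_const card_ord -rmorphXn mul_polyC rmorphXn.
set mT' := (phi h)^-1%:P * ('X - (phi y)%:P).
have inv : mT \Po mT' = 'X.
  rewrite /mT comp_polyD comp_polyM comp_polyC comp_polyX comp_polyC /mT' mulrA -rmorphM.
  by rewrite mulfV // mul1r subrK.
have cancel : forall Q : {poly F}, Q = (Q \Po mT) \Po mT'.
  by move=> Q; rewrite -comp_polyA inv comp_polyXr.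
by rewrite (cancel (map_poly phi g)) (cancel P) mk PmT.
Qed.
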